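(* In the linear deterministic diamond network with a disturbing node with gains $n_1,n_2,n_3,n_4,m$, suppose $n_1>n_2$, $n_4\ge n_3$ and $m>n_2$. Then the linear capacity is $C=\min(n_1,n_3)$.
   Context: The shift matrix $Q$ is the $q\times q$ matrix over $\mathbb{F}_2$ with $Q_{i+1,i}=1$ for $1\le i\le q-1$ and all other entries $0$, where $q=\max(n_1,n_2,n_3,n_4,m)$ and all gains are nonnegative integers. Network: source $S$, relays $A,B$, destination $D$, disturbing node $M$; gains $n_1$ ($S\to A$), $n_2$ ($S\to B$), $n_3$ ($A\to D$), $n_4$ ($B\to D$), $m$ ($M\to A$ and $M\to B$). Each node transmits $x_i\in\mathbb{F}_2^q$ and receives $y_j=\sum_{k:(k,j)\text{ an edge}}Q^{q-n_{(k,j)}}x_k$; relays use linear maps $x_A=G_Ay_A$, $x_B=G_By_B$ with $G_A,G_B$ arbitrary $q\times q$ matrices over $\mathbb{F}_2$. Then $y_D=G_Sx_S+G_Mx_M$ with $G_S=Q^{q-n_3}G_AQ^{q-n_1}+Q^{q-n_4}G_BQ^{q-n_2}$ and $G_M=Q^{q-n_3}G_AQ^{q-m}+Q^{q-n_4}G_BQ^{q-m}$. The rate $R(G_A,G_B)$ is the maximum dimension of a subspace $\mathcal{X}\subseteq\mathbb{F}_2^q$ such that for all $x_S,x_S'\in\mathcal{X}$, $x_M,x_M'\in\mathbb{F}_2^q$, $G_Sx_S+G_Mx_M=G_Sx_S'+G_Mx_M'$ implies $x_S=x_S'$. The linear capacity is $C=\max_{G_A,G_B}R(G_A,G_B)$.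 *)

(* Defs.v *)
(* Vectors are column vectors 'cV_q; a subspace of F_2^q is
   represented by a q x q matrix whose row space is the subspace (mxalgebra),
   a column vector x lying in it iff (x^T <= X)%MS. *)
From HB Require Import structures.
From mathcomp Require Import all_boot all_order all_algebra.
Set Implicit Arguments. Unset Strict Implicit. Unset Printing Implicit Defensive.
Import GRing.Theory.
Local Open Scope ring_scope.

Definition qdim (n1 n2 n3 n4 m : nat) : nat :=
  maxn n1 (maxn n2 (maxn n3 (maxn n4 m))).

Definition shiftQ (q : nat) : 'M['F_2]_q :=
  \matrix_(i < q, j < q) ((i : nat) == (j : nat).+1)%:R.

Definition chan (q n : nat) : 'M['F_2]_q := shiftQ q ^+ (q - n).

Section Network.
Variables n1 n2 n3 n4 m : nat.
Local Notation q := (qdim n1 n2 n3 n4 m).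

Definition GS (GA GB : 'M['F_2]_q) : 'M['F_2]_q :=
  chan q n3 *m GA *m chan q n1 + chan q n4 *m GB *m chan q n2.

Definition GM (GA GB : 'M['F_2]_q) : 'M['F_2]_q :=
  chan q n3 *m GA *m chan q m + chan q n4 *m GB *m chan q m.

Definition decodable (GA GB : 'M['F_2]_q) (X : 'M['F_2]_q) : bool :=
  [forall xS : 'cV['F_2]_q, forall xS' : 'cV['F_2]_q,
   forall xM : 'cV['F_2]_q, forall xM' : 'cV['F_2]_q,
     [&& (xS^T <= X)%MS, (xS'^T <= X)%MS &
         GS GA GB *m xS + GM GA GB *m xM == GS GA GB *m xS' + GM GA GB *m xM']
     ==> (xS == xS')].

Definition rate (GA GB : 'M['F_2]_q) : nat :=
  \max_(X : 'M['F_2]_q | decodable GA GB X) \rank X.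

Definition lin_capacity : nat :=
  \max_(G : 'M['F_2]_q * 'M['F_2]_q) rate G.1 G.2.

End Network.

(* Main.v *)
Require Import Defs.
From mathcomp Require Import all_boot all_order all_algebra.
From mathcomp Require Import zify.
Set Implicit Arguments. Unset Strict Implicit. Unset Printing Implicit Defensive.
Import GRing.Theory.
Local Open Scope ring_scope.

Lemma sum1_in (q c : nat) (g : 'I_q -> 'F_2) (hc : (c < q)%N) :
  \sum_(l < q) ((l:nat) == c)%:R * g l = g (Ordinal hc).
Proof.
rewrite (bigD1 (Ordinal hc)) //= eqxx mul1r big1 ?addr0 //.
move=> l hl; case: eqP => [e|]; last by rewrite mul0r.
by move: hl; rewrite -val_eqE /= e eqxx.
Qed.

Lemma sum1_out (q c : nat) (g : 'I_q -> 'F_2) (hc : (q <= c)%N) :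
  \sum_(l < q) ((l:nat) == c)%:R * g l = 0.
Proof.
rewrite big1 // => l _; case: eqP => [e|]; last by rewrite mul0r.
by move: (ltn_ord l); rewrite e ltnNge hc.
Qed.

Lemma andR (b1 b2 : bool) : ((b1 && b2)%:R : 'F_2) = b1%:R * b2%:R.
Proof. by case: b1; case: b2; rewrite /= ?mul1r ?mul0r. Qed.

Lemma Qexp q k (i j : 'I_q) : (shiftQ q ^+ k) i j = ((i:nat) == (j + k)%N)%:R.
Proof.
elim: k i j => [|k IH] i j.
  by rewrite expr0 -idmxE mxE addn0.
rewrite exprSr -mulmxE mxE.
under eq_bigr => l _ do rewrite IH mxE mulrC.
case: (ltnP j.+1 q) => hj.
  by rewrite (sum1_in _ hj) /= addSn addnS.
rewrite sum1_out //.
case: eqP => // e; exfalso; move: (ltn_ord i); rewrite e; lia.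
Qed.

Lemma Qbig q k : (q <= k)%N -> shiftQ q ^+ k = 0.
Proof.
move=> hk; apply/matrixP => i j; rewrite Qexp mxE.
case: eqP => // e; exfalso; move: (ltn_ord i); rewrite e; lia.
Qed.

Lemma QtQ q a : (shiftQ q ^+ a)^T *m shiftQ q ^+ a = pid_mx (q - a).
Proof.
apply/matrixP => i j; rewrite !mxE.
under eq_bigr => l _ do rewrite mxE !Qexp.
case: (ltnP (i + a) q) => h.
  rewrite (sum1_in _ h) /= eqn_add2r.
  have -> : (i < q - a)%N by lia.
  by rewrite andbT.
rewrite sum1_out //.
have -> : (i < q - a)%N = false by lia.
by rewrite andbF.
Qed.

Lemma Qpid q a : shiftQ q ^+ a *m pid_mx (q - a) = shiftQ q ^+ a.
Proof.
apply/matrixP => i j; rewrite !mxE.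
under eq_bigr => l _ do rewrite mxE !Qexp andR mulrCA.
rewrite (sum1_in _ (ltn_ord j)) /= Qexp.
case: eqP => e; last by rewrite mul0r.
have -> : (j < q - a)%N by (move: (ltn_ord i); rewrite e; lia).
by rewrite mulr1.
Qed.

Lemma rankQ q n : (n <= q)%N -> (\rank (shiftQ q ^+ (q - n)) <= n)%N.
Proof.
move=> hn; rewrite -Qpid; apply: leq_trans (mxrankM_maxr _ _) _.
by rewrite rank_pid_mx; lia.
Qed.

Lemma chanM q a b c : (a <= q)%N -> (b <= a)%N -> (c + b = a)%N ->
  chan q a *m shiftQ q ^+ c = chan q b.
Proof. move=> ha hb hc; rewrite /chan mulmxE -exprD; congr (_ ^+ _); lia. Qed.

Lemma capker (q : nat) (X H : 'M['F_2]_q) :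
  (forall d : 'cV['F_2]_q, H *m d = 0 -> (d^T <= X)%MS -> d = 0) ->
  (\rank X <= \rank H)%N.
Proof.
move=> hd.
have hC : (X :&: kermx H^T)%MS = 0.
  apply/eqP; rewrite -submx0; apply/row_subP => i.
  set v := row i _.
  have : (v <= X :&: kermx H^T)%MS by apply: row_sub.
  rewrite sub_capmx => /andP [hvX /sub_kermxP hvK].
  have -> : v = 0; last by rewrite sub0mx.
  apply: trmx_inj; rewrite trmx0; apply: hd; last by rewrite trmxK.
  by rewrite -[H]trmxK -trmx_mul hvK trmx0.
have := mxrank_sum_cap X (kermx H^T).
rewrite hC mxrank0 addn0 mxrank_ker mxrank_tr.
have := rank_leq_col (X + kermx H^T)%MS.
have := rank_leq_col H.
lia.
Qed.

Lemma upper n1 n2 n3 n4 m (GA GB X : 'M['F_2]_(qdim n1 n2 n3 n4 m)) :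
  (n2 < n1)%N -> (n2 < m)%N -> decodable GA GB X -> (\rank X <= minn n1 n3)%N.
Proof.
move=> h12 h2m hdec.
set q := qdim n1 n2 n3 n4 m in GA GB X hdec *.
have hq1 : (n1 <= q)%N by rewrite /q /qdim; lia.
have hq3 : (n3 <= q)%N by rewrite /q /qdim; lia.
have hqm : (m <= q)%N by rewrite /q /qdim; lia.
set H := chan q n3 *m GA *m chan q n1 - chan q n3 *m GA *m chan q n2.
have E : chan q m *m shiftQ q ^+ (m - n2) = chan q n2 by apply: chanM; lia.
have hGS : GS GA GB = GM GA GB *m shiftQ q ^+ (m - n2) + H.
  rewrite /GS /GM /H mulmxDl -!mulmxA E.
  by rewrite [RHS]addrC [RHS]addrA subrK.
apply: (@leq_trans (\rank H)).
  apply: capker => d hd hdX.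
  have := forallP (forallP (forallP (forallP hdec d) 0) 0) (shiftQ q ^+ (m - n2) *m d).
  move/implyP => /(_ _) /eqP; apply.
  rewrite hdX trmx0 sub0mx /= !mulmx0 addr0 add0r hGS mulmxDl hd addr0 mulmxA.
  by rewrite eqxx.
rewrite leq_min; apply/andP; split.
  have -> : H = chan q n3 *m GA *m (chan q n1 *m (1%:M - shiftQ q ^+ (n1 - n2))).
    rewrite mulmxBr mulmx1 (@chanM _ _ n2); try lia.
    by rewrite /H mulmxBr.
  apply: leq_trans (mxrankM_maxr _ _) _.
  apply: leq_trans (mxrankM_maxl _ _) _.
  exact: rankQ.
rewrite /H -mulmxBr.
apply: leq_trans (mxrankM_maxl _ _) _.
apply: leq_trans (mxrankM_maxl _ _) _.
exact: rankQ.
Qed.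

Lemma lower n1 n2 n3 n4 m : (n2 < n1)%N -> (n3 <= n4)%N -> (n2 < m)%N ->
  exists GA GB X : 'M['F_2]_(qdim n1 n2 n3 n4 m),
    decodable GA GB X /\ (minn n1 n3 <= \rank X)%N.
Proof.
move=> h12 h34 h2m.
set q := qdim n1 n2 n3 n4 m.
have hq1 : (n1 <= q)%N by rewrite /q /qdim; lia.
have hq3 : (n3 <= q)%N by rewrite /q /qdim; lia.
have hq4 : (n4 <= q)%N by rewrite /q /qdim; lia.
set GA : 'M['F_2]_q := (shiftQ q ^+ (q - n1))^T.
set GB : 'M['F_2]_q := - (shiftQ q ^+ (n4 - n3) *m GA).
set H := chan q n3 *m GA *m chan q n1 - chan q n3 *m GA *m chan q n2.
have h43 : chan q n4 *m shiftQ q ^+ (n4 - n3) = chan q n3.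
  by apply: chanM; lia.
have hGM : GM GA GB = 0.
  by rewrite /GM /GB mulmxN mulNmx !mulmxA h43 subrr.
have hGS : GS GA GB = H.
  by rewrite /GS /GB mulmxN mulNmx !mulmxA h43.
exists GA, GB, (kermx H^T)^C%MS; split.
  apply/forallP => xS; apply/forallP => xS'; apply/forallP => xM.
  apply/forallP => xM'; apply/implyP => /and3P [h1 h2 /eqP e].
  move: e; rewrite hGM !mul0mx !addr0 hGS => e.
  have hd : H *m (xS - xS') = 0 by rewrite mulmxBr e subrr.
  have : ((xS - xS')^T <= (kermx H^T)^C :&: kermx H^T)%MS.
    rewrite sub_capmx; apply/andP; split.
      rewrite linearB /=; apply: addmx_sub => //.
      by rewrite -scaleN1r; apply: scalemx_sub.
    by apply/sub_kermxP; rewrite -trmx_mul hd trmx0.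
  rewrite capmxC capmx_compl submx0 => /eqP /(congr1 trmx).
  by rewrite trmxK trmx0 => /eqP; rewrite subr_eq0.
rewrite mxrank_compl mxrank_ker mxrank_tr.
have hHq := rank_leq_col H.
suff : (minn n1 n3 <= \rank H)%N by lia.
set N := shiftQ q ^+ (n1 - n2).
set P1 : 'M['F_2]_q := pid_mx n1.
have hP1 : GA *m chan q n1 = P1 by rewrite /GA /chan QtQ subKn.
have hP2 : GA *m chan q n2 = P1 *m N.
  by rewrite -hP1 -mulmxA (@chanM _ _ n2) //; lia.
have hH : H = chan q n3 *m (P1 *m (1%:M - N)).
  by rewrite /H -!mulmxA hP1 hP2 mulmxBr mulmx1 mulmxBr.
set W := \sum_(i < q) N ^+ i.
have hN0 : N ^+ q = 0.
  rewrite /N -exprM; apply: Qbig.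
  by apply: leq_pmull; lia.
have hW : (1%:M - N) *m W = 1%:M.
  by rewrite mulmxE idmxE -opprB mulNr -subrX1 hN0 sub0r opprK.
apply: (@leq_trans (\rank (H *m W))); last exact: mxrankM_maxl.
rewrite hH -!mulmxA hW mulmx1.
apply: (@leq_trans (\rank ((chan q n3)^T *m (chan q n3 *m P1)))); last exact: mxrankM_maxr.
rewrite mulmxA /chan QtQ subKn // /P1 mul_pid_mx rank_pid_mx; lia.
Qed.

Theorem mainTheorem7 (n1 n2 n3 n4 m : nat) :
  (n2 < n1)%N -> (n3 <= n4)%N -> (n2 < m)%N ->
  lin_capacity n1 n2 n3 n4 m = minn n1 n3.
Proof.
move=> h12 h34 h2m; apply/eqP; rewrite eqn_leq; apply/andP; split.
  apply/bigmax_leqP => G _; apply/bigmax_leqP => X hX.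
  exact: upper hX.
have [GA [GB [X [hX hr]]]] := lower h12 h34 h2m.
apply: leq_trans (leq_bigmax (GA, GB)); rewrite /=.
exact: leq_trans hr (leq_bigmax_cond _ hX).
Qed.
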